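(* Let $\alpha\in\mathbb C$. For every integer $n\ge1$, $$A_\alpha^n=\sum_{i=0}^{\lfloor (n-1)/2\rfloor}\binom{n}{i}P_{n-2i,\alpha}+\varphi_n I,$$ where $\varphi_n=0$ if $n$ is odd and $\varphi_n=\binom{n}{n/2}$ if $n$ is even. All matrices are semi-infinite with rows and columns indexed by the positive integers; $I$ is the semi-infinite identity and $e_1$ its first column. $T(a)$ denotes the Toeplitz matrix with $(i,j)$ entry $a_{j-i}$ for $a(z)=\sum_{i\in\mathbb Z}a_iz^i$. For a vector/power series $v(z)=\sum_{i\ge1}v_iz^i$, $H(v)$ denotes the semi-infinite Hankel matrix with $(i,j)$ entry $v_{i+j-1}$ (its first column is $(v_1,v_2,\ldots)^T$). $A_\alpha:=T(z+z^{-1})+\alpha e_1e_1^T$ (tridiagonal, ones on sub- and superdiagonal, $(1,1)$ entry $\alpha$). Let $\theta=\alpha^2-1$, $h_1(z)=\alpha z$, and $h_n(z)=\theta\sum_{i=1}^{n-1}\alpha^{n-i-1}z^i+\alpha z^n$ for $n\ge2$. Define $H_{n,\alpha}=H(h_n)$, $P_{0,\alpha}=I$ and $P_{n,\alpha}=T(z^n+z^{-n})+H_{n,\alpha}$ for $n\ge1$ (so $P_{1,\alpha}=A_\alpha$). *)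

(* Defs.v *)
From HB Require Import structures.
From mathcomp Require Import all_boot all_order all_algebra.
From mathcomp.real_closed Require Import complex.
From mathcomp Require Import Rstruct.
From Stdlib Require Reals.
Set Implicit Arguments. Unset Strict Implicit. Unset Printing Implicit Defensive.
Import Order.TTheory GRing.Theory Num.Theory.
Local Open Scope ring_scope.

Notation C := (Rdefinitions.R[i]) (only parsing).

(* Semi-infinite matrices, rows/columns indexed by positive integers
   i, j >= 1 (entries at index 0 are irrelevant and never used). *)
Definition smat := nat -> nat -> C.

Definition idm : smat := fun i j => if i == j then 1 else 0.

Definition toeplitz (a : int -> C) : smat := fun i j => a (j%:Z - i%:Z).

Definition hankel (v : nat -> C) : smat := fun i j => v (i + j).-1.

Definition zpm (n : nat) : int -> C :=
  fun k => (if k == n%:Z then 1 else 0) + (if k == - n%:Z then 1 else 0).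

Definition Aal (alpha : C) : smat :=
  fun i j => toeplitz (zpm 1) i j + (if (i == 1%N) && (j == 1%N) then alpha else 0).

Definition theta (alpha : C) : C := alpha ^+ 2 - 1.

(* Coefficients of h_n(z) = theta * sum_{i=1}^{n-1} alpha^{n-i-1} z^i + alpha z^n
   (for n = 1 the sum is empty, giving h_1 = alpha z). *)
Definition hcoef (alpha : C) (n : nat) : nat -> C :=
  fun k => (if (1 <= k < n)%N then theta alpha * alpha ^+ (n - k - 1) else 0)
           + (if k == n then alpha else 0).

Definition Hn (alpha : C) (n : nat) : smat := hankel (hcoef alpha n).

Definition Pn (alpha : C) (n : nat) : smat :=
  if n == 0%N then idm else fun i j => toeplitz (zpm n) i j + Hn alpha n i j.

(* Powers of A_alpha: A^0 = I, A^{n+1} = A * A^n.  The matrix product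
   (A * B)_{ij} = sum_{k>=1} A_{ik} B_{kj} is a finite sum since row i of
   A_alpha vanishes beyond column i+1. *)
Fixpoint Apow (alpha : C) (n : nat) : smat :=
  match n with
  | 0 => idm
  | m.+1 => fun i j => \sum_(1 <= k < i.+2) Aal alpha i k * Apow alpha m k j
  end.

Definition phin (n : nat) : C := if odd n then 0 else ('C(n, n./2))%:R.

(* Main.v *)
Require Import Defs.
From HB Require Import structures.
From mathcomp Require Import all_boot all_order all_algebra.
From mathcomp.real_closed Require Import complex.
From mathcomp Require Import Rstruct.
From mathcomp Require Import zify ring lra.
Import GRing.Theory Num.Theory.
Local Open Scope ring_scope.

Ltac splitifs := repeat (case: ifPn => ?; try (exfalso; lia)).
Definition mulA a (X : smat) : smat := fun i j => \sum_(1 <= k < i.+2) Aal a i k * X k j.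

Lemma mulA_simpl a X i j : (0 < i)%N -> mulA a X i j = (if i == 1%N then a * X 1%N j else X i.-1 j) + X i.+1 j.
Proof.
move=> i0; rewrite /mulA.
case: i i0 => [//|[|i]] _.
  rewrite big_nat_recr //= big_nat1 /Aal /toeplitz /zpm /=.
  splitifs; ring.
rewrite big_nat_recr //= big_nat_recr //= big_nat_recr //= big1_seq; last first.
  move=> k /andP[_]; rewrite mem_index_iota => /andP[k1 k2].
  rewrite /Aal /toeplitz /zpm; splitifs; ring.
rewrite /Aal /toeplitz /zpm; splitifs; ring.
Qed.

Ltac isnum e := lazymatch e with O => idtac | S ?x => isnum x end.
Ltac normpow a :=
  repeat (match goal with
  | |- context[a ^+ ?e] => tryif isnum e then fail else
       (first [ have -> : e = 0%N by lia | have -> : e = 1%N by lia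
              | have -> : e = 2%N by lia | have -> : e = 3%N by lia ])
  end);
  repeat (match goal with
  | |- context[a ^+ ?e1] => tryif isnum e1 then fail else
     match goal with
     | |- context[a ^+ ?e2] => tryif isnum e2 then fail else tryif constr_eq e1 e2 then fail else
        first [ have -> : e1 = e2 by lia | have -> : e1 = (e2 + 1)%N by lia | have -> : e1 = (e2 + 2)%N by lia ];
        try rewrite exprD
     end
  end).


Lemma hankel_mid a m s : (0 < m)%N -> (1 < s)%N ->
  hcoef a m s.-1 + hcoef a m s.+1 = hcoef a m.+1 s + hcoef a m.-1 s.
Proof.
move=> m0 s1; rewrite /hcoef /theta.
splitifs; normpow a; ring.
Qed.

Lemma hankel_row1 a m j : (0 < m)%N -> (0 < j)%N ->
  a * (if j == m.+1 then 1 else 0) + a * hcoef a m j + hcoef a m j.+1 =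
  (if j == m then 1 else 0) + hcoef a m.+1 j + hcoef a m.-1 j.
Proof.
move=> m0 j0; rewrite /hcoef /theta.
splitifs; normpow a; ring.
Qed.

Lemma zpm_shift m (d : int) : (0 < m)%N ->
  zpm m (d + 1) + zpm m (d - 1) = zpm m.+1 d + zpm m.-1 d.
Proof.
move=> m0; rewrite /zpm; splitifs; ring.
Qed.

Lemma aux1 {K : comNzRingType} {a Z1 I1 h h' Z2 Zp hp Zm hm Z0 I0 : K} :
  Z1 = I1 -> Z0 + Z2 = Zp + Zm -> Z0 = I0 -> a*I1 + a*h + h' = I0 + hp + hm ->
  a*(Z1+h) + (Z2+h') = Zp + hp + (Zm + hm).
Proof.
move=> e1 e2 e3 e4.
transitivity (a*I1 + a*h + h' + Z2); first by rewrite e1; ring.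
rewrite e4 -e3.
transitivity (Z0 + Z2 + hp + hm); first ring.
rewrite e2; ring.
Qed.

Lemma aux2 {K : comNzRingType} {Z1 h1 Z2 h2 Zp hp Zm hm : K} :
  Z1 + Z2 = Zp + Zm -> h1 + h2 = hp + hm ->
  Z1 + h1 + (Z2 + h2) = Zp + hp + (Zm + hm).
Proof.
move=> e1 e2.
transitivity (Z1 + Z2 + (h1 + h2)); first ring.
rewrite e1 e2; ring.
Qed.

Lemma zpm_shift' m (d1 d2 d : int) : (0 < m)%N -> d1 = d + 1 -> d2 = d - 1 ->
  zpm m d1 + zpm m d2 = zpm m.+1 d + zpm m.-1 d.
Proof. by move=> m0 -> ->; apply: zpm_shift. Qed.

Lemma hankel_mid' a m s s1 s2 : (0 < m)%N -> (1 < s)%N -> s1 = s.-1 -> s2 = s.+1 ->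
  hcoef a m s1 + hcoef a m s2 = hcoef a m.+1 s + hcoef a m.-1 s.
Proof. by move=> m0 s0 -> ->; apply: hankel_mid. Qed.

Definition R a m : smat := fun i j => zpm m (j%:Z - i%:Z) + hcoef a m (i + j).-1.

Lemma coreR a m i j : (0 < m)%N -> (0 < i)%N -> (0 < j)%N ->
  mulA a (R a m) i j = R a m.+1 i j + R a m.-1 i j.
Proof.
move=> m0 i0 j0; rewrite mulA_simpl // /R.
case: i i0 => [//|[|i]] _.
  rewrite eqxx.
  have H1 := hankel_row1 a m j m0 j0.
  have H2 := zpm_shift' m (j%:Z - 1 + 1) (j%:Z - 2%:Z) (j%:Z - 1%:Z) m0 erefl (_ : _ = _ - 1).
  have E1 : zpm m (j%:Z - 1%:Z) = if j == m.+1 then 1 else 0.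
    by rewrite /zpm; splitifs; ring.
  have E2 : zpm m (j%:Z - 1 + 1) = if j == m then 1 else 0.
    by rewrite /zpm; splitifs; ring.
  have {}H2 := H2 ltac:(lia).
  exact: (aux1 E1 H2 E2 H1).
have H := hankel_mid' a m (i.+2 + j).-1 (i + j) (i.+2 + j) m0 (_ : (1 < (i.+2 + j).-1)%N) erefl erefl.
have H2 := zpm_shift' m (j%:Z - i.+1%:Z) (j%:Z - i.+3%:Z) (j%:Z - i.+2%:Z) m0.
apply: aux2.
  apply: H2; lia.
apply: H; lia.
Qed.

Lemma coreR0 a i j : (0 < i)%N -> (0 < j)%N ->
  mulA a (R a 0) i j = R a 1 i j + R a 1 i j.
Proof.
move=> i0 j0; rewrite mulA_simpl // /R.
case: i i0 => [//|[|i]] _; rewrite /= /zpm /hcoef; splitifs; normpow a; ring.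
Qed.

Lemma coreZ a (m : int) i j : (0 < i)%N -> (0 < j)%N ->
  mulA a (R a (absz m)) i j = R a (absz (m + 1)) i j + R a (absz (m - 1)) i j.
Proof.
move=> i0 j0; case: m => [m|m]; [case: m => [|m]|].
- by rewrite coreR0 //; congr (R a _ i j + R a _ i j); lia.
- by rewrite coreR //; congr (R a _ i j + R a _ i j); lia.
- rewrite (_ : absz (Negz m) = m.+1); last by lia.
  by rewrite coreR // [LHS]addrC; congr (R a _ i j + R a _ i j); lia.
Qed.

Lemma mulA_sum a (G : nat -> smat) (r : seq nat) i j :
  mulA a (fun k j => \sum_(l <- r) G l k j) i j = \sum_(l <- r) mulA a (G l) i j.
Proof.
rewrite /mulA; under eq_bigr do rewrite mulr_sumr.
by rewrite exchange_big.
Qed.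

Lemma mulA_scale a c X i j : mulA a (fun k j => c * X k j) i j = c * mulA a X i j.
Proof.
rewrite /mulA mulr_sumr; apply: eq_bigr => k _; by rewrite mulrCA.
Qed.

Lemma mulA_ext a X Y i j : (forall k, (0 < k)%N -> X k j = Y k j) -> mulA a X i j = mulA a Y i j.
Proof.
move=> H; rewrite /mulA; apply: eq_big_nat => k /andP[k1 _]; by rewrite H.
Qed.

Definition F a n l : smat := fun i j => ('C(n, l))%:R * R a (absz (n%:Z - (2 * l)%:Z)%R) i j.
Definition S a n : smat := fun i j => \sum_(0 <= l < n.+1) F a n l i j.

Lemma S_step a n i j : (0 < i)%N -> (0 < j)%N -> S a n.+1 i j = mulA a (S a n) i j.
Proof.
move=> i0 j0.
rewrite /S mulA_sum.
have MS : forall l, mulA a (F a n l) i j = ('C(n, l))%:R * (R a (absz (n%:Z - (2 * l)%:Z + 1)%R) i j + R a (absz (n%:Z - (2 * l)%:Z - 1)%R) i j).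
  by move=> l; rewrite (mulA_scale a ('C(n, l))%:R (R a (absz (n%:Z - (2 * l)%:Z)%R))) coreZ.
rewrite (eq_bigr _ (fun l _ => MS l)).
set G := fun l => R a (absz ((n.+1)%:Z - (2 * l)%:Z)%R) i j.
have G1 : forall l, R a (absz (n%:Z - (2 * l)%:Z + 1)%R) i j = G l.
  by move=> l; rewrite /G; congr (R a _ i j); lia.
have G2 : forall l, R a (absz (n%:Z - (2 * l)%:Z - 1)%R) i j = G l.+1.
  by move=> l; rewrite /G; congr (R a _ i j); lia.
under eq_bigr => l _ do rewrite G1 G2 mulrDr.
rewrite big_split /=.
rewrite big_nat_recl //.
under eq_bigr => l _ do rewrite /F binS natrD mulrDl.
rewrite big_split /=.
rewrite addrA; congr (_ + _).
rewrite big_nat_recr //= bin_small // mul0r addr0.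
rewrite [RHS]big_nat_recl // /F bin0 bin0.
congr (_ + _).
Qed.


Lemma S_Apow a n i j : (0 < i)%N -> (0 < j)%N -> S a n i j = 2 * Apow a n i j.
Proof.
elim: n i j => [|n IH] i j i0 j0.
  rewrite /S big_nat1 /F bin0 /= /R /zpm /hcoef /idm; splitifs; normpow a; ring.
rewrite S_step // (mulA_ext a (S a n) (fun k j => 2 * Apow a n k j) i j); last first.
  by move=> k k0; rewrite IH.
by rewrite mulA_scale.
Qed.

Lemma upper_rev (f : nat -> C) n q : (q <= n)%N -> (forall l, (l <= n)%N -> f (n - l)%N = f l) ->
  \sum_(q.+1 <= l < n.+1) f l = \sum_(0 <= l < n - q) f l.
Proof.
move=> qn H.
rewrite -{1}[q.+1]add0n big_addn big_nat_rev.
have -> : (n.+1 - q.+1 = n - q)%N by lia.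
apply: eq_big_nat => l /andP[_ hl].
rewrite -H; last by lia.
congr f; lia.
Qed.

Lemma F_sym a n l i j : (l <= n)%N -> F a n (n - l)%N i j = F a n l i j.
Proof.
move=> ln; rewrite /F bin_sub //; congr (_ * R a _ i j); lia.
Qed.

Lemma F_P a n l i j : (2 * l < n)%N -> F a n l i j = ('C(n, l))%:R * Pn a (n - 2 * l) i j.
Proof.
move=> h; rewrite /F /Pn.
have -> : (n - 2 * l == 0)%N = false by apply/negbTE; lia.
rewrite /R /toeplitz /Hn /hankel; congr (_ * (zpm _ _ + hcoef a _ _)); lia.
Qed.

Theorem corollary4 (alpha : C) (n : nat) : (1 <= n)%N ->
  forall i j : nat, (0 < i)%N -> (0 < j)%N ->
  Apow alpha n i j =
    \sum_(0 <= l < ((n.-1)./2).+1) ('C(n, l))%:R * Pn alpha (n - 2 * l) i j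
    + phin n * idm i j.
Proof.
move=> n1 i j i0 j0.
have two0 : (2 : C) != 0 by rewrite pnatr_eq0.
apply: (mulfI two0).
rewrite -S_Apow // /S.
set q := (n.-1)./2.
have qn : (q <= n)%N by rewrite /q; lia.
rewrite (big_cat_nat (n := q.+1)) //=.
rewrite (upper_rev (fun l => F alpha n l i j)) //; last by move=> l ln; apply: F_sym.
have E : \sum_(0 <= l < q.+1) F alpha n l i j = \sum_(0 <= l < q.+1) ('C(n, l))%:R * Pn alpha (n - 2 * l) i j.
  apply: eq_big_nat => l /andP[_ hl]; apply: F_P; rewrite /q in hl; lia.
rewrite /phin; case: ifP => on.
  have Hn := odd_double_half n; rewrite on in Hn.
  have Hq : q = n./2 by rewrite /q -{1}Hn add1n /= half_double.
  have -> : (n - q = q.+1)%N by rewrite Hq -{1}Hn -muln2; lia.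
  rewrite E mul0r addr0; ring.
have Hn := odd_double_half n; rewrite on add0n in Hn.
have Hq : q.+1 = n./2.
  rewrite /q; move: Hn; case: (n./2) => [|k] Hn'.
    by rewrite -Hn' in n1.
  by rewrite -Hn' doubleS /= uphalf_double.
have -> : (n - q = q.+2)%N by move: Hn; rewrite -Hq -muln2; lia.
rewrite [X in _ + X = _]big_nat_recr //= E Hq /F.
have -> : absz (n%:Z - (2 * n./2)%:Z)%R = 0%N.
  by rewrite -{1}Hn -muln2 mulnC; lia.
have -> : R alpha 0 i j = 2 * idm i j.
  by rewrite /R /zpm /hcoef /idm; splitifs; ring.
move: (\sum_(0 <= l < n./2) _) ('C(n, n./2))%:R (idm i j) => x y z.
ring.
Qed.
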